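(* Let $f:X\to Y$ be a continuous map of sober topological spaces which is an epimorphism in the category of sober spaces and continuous maps, and suppose that $X$ is noetherian. Then $f$ is surjective.
   Context: A topological space is sober if every irreducible closed subset has a unique generic point. A topological space is noetherian if every descending chain of closed subsets stabilizes. *)

(* Defs.v *)
From mathcomp Require Import all_boot all_order.
From mathcomp Require Import all_classical all_reals all_analysis.
Set Implicit Arguments. Unset Strict Implicit. Unset Printing Implicit Defensive.
Local Open Scope classical_set_scope.

Definition irreducible_set {T : topologicalType} (A : set T) : Prop :=
  A !=set0 /\
  forall B C : set T, closed B -> closed C -> A `<=` B `|` C ->
    A `<=` B \/ A `<=` C.

Definition generic_point {T : topologicalType} (x : T) (A : set T) : Prop :=
  closure [set x] = A.

Definition sober (T : topologicalType) : Prop :=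
  forall A : set T, closed A -> irreducible_set A ->
    exists! x : T, generic_point x A.

Definition noetherian_space (T : topologicalType) : Prop :=
  forall C : nat -> set T, (forall n, closed (C n)) ->
    (forall n, C n.+1 `<=` C n) ->
    exists N, forall n, (N <= n)%N -> C n = C N.

Definition sober_epi {X Y : topologicalType} (f : X -> Y) : Prop :=
  forall (Z : topologicalType), sober Z ->
    forall g h : Y -> Z, continuous g -> continuous h ->
      g \o f = h \o f -> g = h.

(* Main.v *)
Require Import Defs.
From HB Require Import structures.
From mathcomp Require Import all_boot all_order.
From mathcomp Require Import all_classical all_reals all_analysis.
Set Implicit Arguments. Unset Strict Implicit. Unset Printing Implicit Defensive.
Local Open Scope classical_set_scope.

Inductive sier := Son | Soff.
Definition s2b (s : sier) : bool := if s is Son then true else false.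
Definition b2s (b : bool) : sier := if b then Son else Soff.
Lemma s2bK : cancel s2b b2s. Proof. by case. Qed.
HB.instance Definition _ := Choice.copy sier (can_type s2bK).
Definition sop (U : set sier) : Prop := U Soff -> U Son.
Lemma sopT : sop setT. Proof. by []. Qed.
Lemma sopI : setI_closed sop.
Proof. by move=> A B hA hB [/hA ? /hB ?]. Qed.
Lemma sop_bigU (I : Type) (f : I -> set sier) : (forall i, sop (f i)) -> sop (\bigcup_i f i).
Proof. by move=> h [i _ fi]; exists i => //; apply: h. Qed.
HB.instance Definition _ := isOpenTopological.Build sier sopT sopI sop_bigU.

Lemma sier_open (U : set sier) : open U = sop U.
Proof. by []. Qed.
Lemma sier_closed (A : set sier) : closed A <-> (A Son -> A Soff).
Proof.
rewrite -openC sier_open /sop /=; split=> h.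
  by move=> At; apply: contrapT => Af; exact: (h Af At).
by move=> nAf At; apply: nAf; apply: h.
Qed.

Lemma sier_cl_true : closure [set Son] = setT.
Proof.
have cc := @closed_closure sier [set Son].
move/sier_closed: cc => cc.
have ht : closure [set Son] Son by apply: subset_closure.
by apply/seteqP; split => // -[] _ //; apply: cc.
Qed.

Lemma sier_cl_false : closure [set Soff] = [set Soff].
Proof. by apply/esym/closure_id/sier_closed. Qed.

Lemma sier_sober : sober sier.
Proof.
move=> A cA [[a Aa] _].
have cA' := cA; move/sier_closed: cA' => cA'.
have [At|nAt] := pselect (A Son).
  have eA : A = setT.
    by apply/seteqP; split => // -[] _ //; apply: cA'.
  exists Son; split; first by rewrite /generic_point sier_cl_true.
  move=> [] //; rewrite /generic_point sier_cl_false eA => h.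
  by have : [set Soff] Son by rewrite h.
have eA : A = [set Soff].
  apply/seteqP; split => -[] //= _.
  by case: a Aa => // /nAt.
exists Soff; split; first by rewrite /generic_point sier_cl_false.
move=> [] //; rewrite /generic_point sier_cl_true eA => h.
by have : [set Soff] Son by rewrite -h.
Qed.

Definition chi {Y : topologicalType} (O : set Y) : Y -> sier :=
  fun z => b2s `[< O z >].

Lemma chi_cont (Y : topologicalType) (O : set Y) : open O -> continuous (chi O).
Proof.
move=> oO; apply/continuousP => U; rewrite sier_open /sop => hU.
have [Ut|nUt] := pselect (U Son); have [Uf|nUf] := pselect (U Soff).
- have -> : chi O @^-1` U = setT.
    by apply/seteqP; split => // z _; rewrite /chi /=; case: (`[< O z >]).
  exact: openT.
- have -> : chi O @^-1` U = O.
    apply/seteqP; split => z /=; rewrite /chi.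
      by case: (pselect (O z)) => // /asboolF ->.
    by move=> Oz; rewrite asboolT.
  exact: oO.
- by exfalso; apply: nUt; apply: hU.
- have -> : chi O @^-1` U = set0.
    by apply/seteqP; split => z //=; rewrite /chi; case: (`[< O z >]).
  exact: open0.
Qed.

Lemma noeth_ind (X : topologicalType) : noetherian_space X ->
  forall P : set X -> Prop,
  (forall F, closed F -> (forall G, closed G -> G `<=` F -> G <> F -> P G) -> P F) ->
  forall F, closed F -> P F.
Proof.
move=> nX P IH F0 cF0; apply: contrapT => nP0.
pose bad := fun F : set X => closed F /\ ~ P F.
have step : forall F : {F | bad F}, {G : {F | bad F} | proj1_sig G `<=` proj1_sig F /\ proj1_sig G <> proj1_sig F}.
  move=> [F [cF nPF]].
  have : exists G, bad G /\ G `<=` F /\ G <> F.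
    apply: contrapT => hn; apply: nPF; apply: IH => // G cG sGF nGF.
    apply: contrapT => nPG; apply: hn; by exists G.
  move=> /cid [G [bG [sGF nGF]]].
  by exists (exist _ G bG).
pose s0 : {F | bad F} := exist _ F0 (conj cF0 nP0).
pose nx := fun F => proj1_sig (step F).
pose C := fun n => proj1_sig (iter n nx s0).
have [N hN] := nX C (fun n => proj1 (proj2_sig (iter n nx s0)))
  (fun n => proj1 (proj2_sig (step (iter n nx s0)))).
have := hN N.+1 (leqnSn N).
exact: (proj2 (proj2_sig (step (iter N nx s0)))).
Qed.

Lemma image_closure (X Y : topologicalType) (f : X -> Y) (A : set X) :
  continuous f -> f @` closure A `<=` closure (f @` A).
Proof.
move=> cf; have cP : closed (f @^-1` closure (f @` A)).
  by move/continuous_closedP: cf; apply; exact: closed_closure.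
have sub : closure A `<=` f @^-1` closure (f @` A).
  rewrite [X in _ `<=` X](closure_id _).1 //; apply: closureS.
  by move=> a Aa; apply: subset_closure; exists a.
by move=> _ [a /sub ha <-].
Qed.

Lemma closure_min (T : topologicalType) (A B : set T) :
  closed B -> A `<=` B -> closure A `<=` B.
Proof. by move=> cB sAB; rewrite [X in _ `<=` X](closure_id _).1 //; apply: closureS. Qed.

Lemma irred_cl_point (T : topologicalType) (y : T) : irreducible_set (closure [set y]).
Proof.
split; first by exists y; apply: subset_closure.
move=> B C cB cC sub.
have [] := sub y (subset_closure (erefl y)) => h.
  by left; apply: closure_min => // _ ->.
by right; apply: closure_min => // _ ->.
Qed.

Theorem proposition1p7 (X Y : topologicalType) (f : X -> Y) :
  sober X -> sober Y -> continuous f -> sober_epi f -> noetherian_space X ->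
  forall y : Y, exists x : X, f x = y.
Proof.
move=> sX sY cf ef nX y; apply: contrapT => ny.
pose C := closure [set y].
have cC : closed C by exact: closed_closure.
have claim : forall F, closed F -> f @` F `<=` C -> ~ closure (f @` F) y.
  apply: (noeth_ind nX) => F cF IH sFC yF.
  have irF : irreducible_set F.
    split.
      apply: contrapT => Fe; move: yF.
      have -> : F = set0 by apply/seteqP; split => // z Fz; apply: Fe; exists z.
      by rewrite image_set0 closure0.
    move=> B D cB cD sub.
    have [sB|nB] := pselect (F `<=` B); first by left.
    have [sD|nD] := pselect (F `<=` D); first by right.
    exfalso.
    have h1 : ~ closure (f @` (F `&` B)) y.
      apply: IH; first exact: closedI.
      - by move=> z [].
      - by move=> e; apply: nB; rewrite -e => z [].
      - by move=> _ [z [Fz _] <-]; apply: sFC; exists z.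
    have h2 : ~ closure (f @` (F `&` D)) y.
      apply: IH; first exact: closedI.
      - by move=> z [].
      - by move=> e; apply: nD; rewrite -e => z [].
      - by move=> _ [z [Fz _] <-]; apply: sFC; exists z.
    have : closure (f @` F) `<=` closure (f @` (F `&` B)) `|` closure (f @` (F `&` D)).
      apply: closure_min; first by apply: closedU; exact: closed_closure.
      move=> _ [z Fz <-]; have [] := sub z Fz => h.
        by left; apply: subset_closure; exists z.
      by right; apply: subset_closure; exists z.
    by move=> /(_ y yF) [].
  have [x [gx _]] := sX F cF irF.
  have sfx : closure (f @` F) `<=` closure [set f x].
    apply: closure_min; first exact: closed_closure.
    rewrite /generic_point in gx; rewrite -gx.
    move=> _ [z zF <-]; have := @image_closure _ _ f [set x] cf.
    rewrite image_set1; apply; by exists z.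
  have e1 : closure [set f x] = C.
    apply/seteqP; split.
      apply: closure_min => // _ ->; apply: sFC; exists x => //.
      by rewrite -gx; apply: subset_closure.
    by apply: closure_min; [exact: closed_closure| move=> _ ->; apply: sfx].
  have [x0 [_ un]] := sY C cC (irred_cl_point y).
  have : f x = y.
    by rewrite -(un (f x) e1) (un y erefl).
  by move=> e; apply: ny; exists x.
pose F := f @^-1` C.
have cF : closed F by move/continuous_closedP: cf; apply.
have nD := claim F cF (@image_preimage_subset _ _ f C).
pose D := closure (f @` F).
have oU : open (~` C) by exact: closed_openC.
have oV : open (~` (C `&` D)) by apply: closed_openC; apply: closedI => //; exact: closed_closure.
have := ef sier sier_sober _ _ (chi_cont oU) (chi_cont oV).
have -> : chi (~` C) \o f = chi (~` (C `&` D)) \o f.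
  apply: funext => x /=; rewrite /chi.
  suff -> : (~` C) (f x) = (~` (C `&` D)) (f x) by [].
  apply: propext; split.
    by move=> nCx [Cx _].
  move=> h Cx; apply: h; split => //; apply: subset_closure; exists x => //.
move=> /(_ erefl) /(congr1 (fun g => g y)); rewrite /chi /=.
rewrite asboolF; last by move=> /(_ (subset_closure (erefl y))).
by rewrite asboolT // => -[].
Qed.
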